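(* Let $C$ be an ensemble choice aggregator that respects model choice reversal. Let $y,y'\in Y$ and $z,z'\in S(Y)$ be such that for every $j\in\{1,\dots,m\}$ we have $z_{j,d(y)}>z_{j,d(y')}$ if and only if $z'_{j,d(y)}>z'_{j,d(y')}$. Then $C(\{y,y'\},z)=C(\{y,y'\},z')$.
   Context: Let $Y$ be a nonempty set of labels and $m\ge 2$ an integer (the number of models). For each $j\in\{1,\dots,m\}$ let $S_j(Y)\subseteq\mathbb{R}^{|Y|}$ be a set of score vectors whose coordinates are indexed by labels, and let $S(Y)=\prod_{j=1}^m S_j(Y)$. An element $z\in S(Y)$ is written $z=(z_{j,d(y)})_{j,y}$, where $z_{j,d(y)}$ denotes model $j$'s score for label $y$. An ensemble choice aggregator is a set-valued function $C:(2^Y\setminus\{\emptyset\})\times S(Y)\to 2^Y\setminus\{\emptyset\}$ such that for every nonempty $Y^*\subseteq Y$ and every $z\in S(Y)$: (i) $C(Y^*,z)\subseteq Y^*$; and (ii) for every $y\in Y^*$, if there does not exist $y'\in Y^*$ with $\{y'\}=C(\{y,y'\},z)$, then $y\in C(Y^*,z)$. $C$ respects model choice reversal if for all $y,y'\in Y$ and all $z,z'\in S(Y)$: whenever $y\in C(\{y,y'\},z)$, $y'\notin C(\{y,y'\},z)$, and $y'\in C(\{y,y'\},z')$, there exists $j$ such that $z_{j,d(y)}>z_{j,d(y')}$ and $z'_{j,d(y)}<z'_{j,d(y')}$. *)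

(* Defs.v *)
From mathcomp Require Import all_boot all_order all_algebra.
From mathcomp Require Import boolp classical_sets reals.
Set Implicit Arguments. Unset Strict Implicit. Unset Printing Implicit Defensive.
Import Order.TTheory GRing.Theory Num.Theory.
Local Open Scope classical_set_scope.
Local Open Scope ring_scope.

(* A score profile z assigns to each model j : 'I_m and label y the score
   z j y (this is z_{j,d(y)}). *)
Definition profiles (R : realType) (Y : Type) (m : nat)
  (S : 'I_m -> set (Y -> R)) : set ('I_m -> Y -> R) :=
  [set z | forall j, S j (z j)].

Definition ensemble_choice_aggregator (R : realType) (Y : Type) (m : nat)
  (S : 'I_m -> set (Y -> R))
  (C : set Y -> ('I_m -> Y -> R) -> set Y) : Prop :=
  forall (Ys : set Y) (z : 'I_m -> Y -> R),
    Ys !=set0 -> profiles S z ->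
    [/\ C Ys z !=set0,
        C Ys z `<=` Ys &
        forall y, Ys y ->
          ~ (exists y', Ys y' /\ C [set y; y'] z = [set y']) ->
          C Ys z y].

Definition respects_model_choice_reversal (R : realType) (Y : Type) (m : nat)
  (S : 'I_m -> set (Y -> R))
  (C : set Y -> ('I_m -> Y -> R) -> set Y) : Prop :=
  forall (y y' : Y) (z z' : 'I_m -> Y -> R),
    profiles S z -> profiles S z' ->
    C [set y; y'] z y -> ~ C [set y; y'] z y' -> C [set y; y'] z' y' ->
    exists j : 'I_m, z j y > z j y' /\ z' j y < z' j y'.

(* Main.v *)
Require Import Defs.
From mathcomp Require Import all_boot all_order all_algebra.
From mathcomp Require Import boolp classical_sets reals.
Import Order.TTheory GRing.Theory Num.Theory.
Local Open Scope classical_set_scope.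
Local Open Scope ring_scope.

Lemma key (R : realType) (Y : Type) (m : nat)
  (S : 'I_m -> set (Y -> R))
  (C : set Y -> ('I_m -> Y -> R) -> set Y) :
  respects_model_choice_reversal S C ->
  forall (y y' : Y) (z z' : 'I_m -> Y -> R),
    profiles S z -> profiles S z' ->
    (forall j : 'I_m, z j y > z j y' <-> z' j y > z' j y') ->
    (C [set y; y'] z y -> ~ C [set y; y'] z y' -> ~ C [set y; y'] z' y') /\
    (C [set y; y'] z y' -> ~ C [set y; y'] z y -> ~ C [set y; y'] z' y).
Proof.
move=> Hrev y y' z z' Pz Pz' H; split.
- move=> h1 h2 h3.
  have [j [ja jb]] := Hrev _ _ _ _ Pz Pz' h1 h2 h3.
  have := (proj1 (H j) ja) => jc.
  by have := lt_trans jb jc; rewrite ltxx.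
- rewrite setUC => h1 h2 h3.
  have [j [ja jb]] := Hrev _ _ _ _ Pz Pz' h1 h2 h3.
  have := (proj2 (H j) jb) => jc.
  by have := lt_trans ja jc; rewrite ltxx.
Qed.

Lemma half (R : realType) (Y : Type) (m : nat)
  (S : 'I_m -> set (Y -> R))
  (C : set Y -> ('I_m -> Y -> R) -> set Y) :
  ensemble_choice_aggregator S C ->
  respects_model_choice_reversal S C ->
  forall (y y' : Y) (z z' : 'I_m -> Y -> R),
    profiles S z -> profiles S z' ->
    (forall j : 'I_m, z j y > z j y' <-> z' j y > z' j y') ->
    forall x, C [set y; y'] z x -> C [set y; y'] z' x.
Proof.
move=> Hagg Hrev y y' z z' Pz Pz' H x hx.
apply/not_notP => nx.
have ne : [set y; y'] !=set0 by exists y; left.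
have [[w hw] sub _] := Hagg _ _ ne Pz'.
have [_ sz _] := Hagg _ _ ne Pz.
have H' : forall j : 'I_m, z' j y > z' j y' <-> z j y > z j y'.
  by move=> j; split => /(H j).
have [k1 k2] := @key _ _ _ _ _ Hrev _ _ _ _ Pz' Pz H'.
have := sz _ hx; have := sub _ hw.
move=> [we|we] [xe|xe]; move: we xe => /= we xe; subst x w => //.
- exact: (k1 hw nx hx).
- exact: (k2 hw nx hx).
Qed.

Theorem lemma2 (R : realType) (Y : Type) (m : nat) (hm : (2 <= m)%N)
  (S : 'I_m -> set (Y -> R))
  (C : set Y -> ('I_m -> Y -> R) -> set Y) :
  ensemble_choice_aggregator S C ->
  respects_model_choice_reversal S C ->
  forall (y y' : Y) (z z' : 'I_m -> Y -> R),
    profiles S z -> profiles S z' ->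
    (forall j : 'I_m, z j y > z j y' <-> z' j y > z' j y') ->
    C [set y; y'] z = C [set y; y'] z'.
Proof.
move=> Hagg Hrev y y' z z' Pz Pz' H.
have H' : forall j : 'I_m, z' j y > z' j y' <-> z j y > z j y'.
  by move=> j; split => /(H j).
apply/seteqP; split => x.
- exact: (@half _ _ _ _ _ Hagg Hrev _ _ _ _ Pz Pz' H).
- exact: (@half _ _ _ _ _ Hagg Hrev _ _ _ _ Pz' Pz H').
Qed.
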